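(* For every digraph $X=(V,E)$ and every edge $e\in E$, $u_X(m)=u_{X\setminus e}(m)-u_{X/e}(m)$.
   Context: A digraph $X=(V,E)$: $V$ finite, $E\subset\{(u,v)\in V\times V\mid u\ne v\}$. $\Sigma_V$ is the set of bijections $\sigma:[n]\to V$ ($n=|V|$), $X\mathrm{Des}(\sigma)=\{i\in[n-1]\mid(\sigma_i,\sigma_{i+1})\in E\}$; $F_I=\sum x_{i_1}\cdots x_{i_n}$ over $1\le i_1\le\cdots\le i_n$ with $i_j<i_{j+1}$ for $j\in I$; $U_X=\sum_{\sigma\in\Sigma_V}F_{X\mathrm{Des}(\sigma)}$; the Redei–Berge polynomial is $u_X(m)=U_X(1,\dots,1,0,\dots)$ with $m$ ones (equivalently, the number of pairs $(f,\sigma)$ with $f:V\to[m]$ and $\sigma\in\Sigma_V$ satisfying $f(\sigma_1)\le\cdots\le f(\sigma_n)$ and $f(\sigma_j)<f(\sigma_{j+1})$ whenever $(\sigma_j,\sigma_{j+1})\in E$). Deletion: $X\setminus e=(V,E\setminus\{e\})$. Contraction by $e=(u,v)$: $X/e=(V',E')$ with $V'=(V\setminus\{u,v\})\cup\{e\}$, $E'$ containing all edges of $E$ with both endpoints different from $u,v$, and for $w\ne u,v$: $(w,e)\in E'$ iff $(w,u)\in E$, and $(e,w)\in E'$ iff $(v,w)\in E$ (no other edges). *)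

(* Defs.v *)
From mathcomp Require Import all_boot all_order all_algebra.
Set Implicit Arguments. Unset Strict Implicit. Unset Printing Implicit Defensive.

(* A digraph is a finite vertex type V with an edge relation E : rel V
   ((u,v) is an edge iff E u v); loops are excluded by the hypothesis
   [irreflexive E] in the theorem. *)

Definition compat (V : finType) (E : rel V) (m : nat) (f : {ffun V -> 'I_m})
  : rel V := fun x y => (f x <= f y) && (E x y ==> (f x < f y)).

Definition redei_berge (V : finType) (E : rel V) (m : nat) : nat :=
  \sum_(sigma : {ffun 'I_#|V| -> V} | injectiveb sigma)
     #|[set f : {ffun V -> 'I_m} |
         sorted (compat E f) [seq sigma i | i <- enum 'I_#|V|]]|.

Definition del_rel (V : finType) (E : rel V) (u v : V) : rel V :=
  fun x y => E x y && ~~ ((x == u) && (y == v)).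

(* Vertex set of the contraction X / e: (V \ {u,v}) together with a new
   vertex (represented by None) standing for e. *)
Definition contr_vert (V : finType) (u v : V) : finType :=
  option {x : V | (x != u) && (x != v)}.

Definition contr_rel (V : finType) (E : rel V) (u v : V) : rel (contr_vert u v) :=
  fun a b => match a, b with
  | Some x, Some y => E (val x) (val y)
  | Some x, None => E (val x) u
  | None, Some y => E v (val y)
  | None, None => false
  end.
Arguments contr_rel {V} E u v.
Arguments contr_vert {V} u v.

(* Main.v *)
Require Import Defs.
From mathcomp Require Import all_boot all_order all_algebra.
Set Implicit Arguments. Unset Strict Implicit. Unset Printing Implicit Defensive.

Lemma count_sum (T : Type) (a : pred T) r : count a r = \sum_(x <- r) a x.
Proof. by elim: r => [|x r IH]; rewrite ?big_nil ?big_cons //= IH. Qed.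

Lemma sum_card_count (T : finType) (m : nat) (l : seq (seq T))
  (Pr : seq T -> {ffun T -> 'I_m} -> bool) :
  \sum_(s <- l) #|[set f | Pr s f]| =
  count (fun p => Pr p.1 p.2) [seq (s, f) | s <- l, f <- index_enum {ffun T -> 'I_m}].
Proof.
rewrite count_sum big_allpairs; apply: eq_bigr => s _.
transitivity (\sum_(f : {ffun T -> 'I_m}) (Pr s f : nat)); last by [].
rewrite -sum1_card big_mkcond; apply: eq_bigr => f _; rewrite inE.
by case: (Pr s f).
Qed.

Lemma count_bij (A B : eqType) (L1 : seq A) (L2 : seq B) (Q : pred A) (P : pred B)
  (psi : A -> B) (phi : B -> A) :
  uniq L1 -> uniq L2 -> cancel psi phi ->
  (forall x, x \in L1 -> Q x -> psi x \in L2 /\ P (psi x)) ->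
  (forall y, y \in L2 -> P y -> [/\ phi y \in L1, Q (phi y) & psi (phi y) = y]) ->
  count Q L1 = count P L2.
Proof.
move=> U1 U2 K H1 H2; rewrite -!size_filter -(size_map psi).
apply: perm_size; apply: uniq_perm.
- by rewrite map_inj_uniq ?filter_uniq //; apply: can_inj K.
- exact: filter_uniq.
move=> y; apply/mapP/idP.
- move=> [x]; rewrite mem_filter => /andP[Qx Lx] ->.
  by have [? ?] := H1 x Lx Qx; rewrite mem_filter; apply/andP.
- rewrite mem_filter => /andP[Py Ly]; have [La Qa E] := H2 y Ly Py.
  by exists (phi y) => //; rewrite mem_filter Qa.
Qed.

Lemma mem_pairs (T : finType) (m : nat) (l : seq (seq T)) p :
  (p \in [seq (s, f) | s <- l, f <- index_enum {ffun T -> 'I_m}]) = (p.1 \in l).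
Proof.
apply/allpairsP/idP => [[[s f] [/= sl _ ->]] //|pl].
by exists p; split; rewrite ?mem_index_enum //; case: p pl.
Qed.

Lemma uniq_pairs (T : finType) (m : nat) (l : seq (seq T)) :
  uniq l -> uniq [seq (s, f) | s <- l, f <- index_enum {ffun T -> 'I_m}].
Proof.
move=> Ul; apply: allpairs_uniq => //; first exact: index_enum_uniq.
by move=> [a b] [c d] _ _ /= [-> ->].
Qed.

Lemma permE (T : finType) (s : seq T) :
  (s \in permutations (enum T)) <-> (uniq s /\ forall x, x \in s).
Proof.
rewrite mem_permutations; split.
- move=> ps; split; first by rewrite (perm_uniq ps) enum_uniq.
  by move=> x; rewrite (perm_mem ps) mem_enum.
- move=> [Us Hs]; apply: uniq_perm => //; first exact: enum_uniq.
  by move=> x; rewrite mem_enum Hs.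
Qed.

Lemma sorted_mid (T : Type) (r : rel T) s x y t :
  sorted r (s ++ x :: y :: t) -> r x y.
Proof.
elim: s => [|a s IH] /=; first by case/andP.
by move/path_sorted; apply: IH.
Qed.
Definition gseq (T : finType) (sigma : {ffun 'I_#|T| -> T}) :=
  [seq sigma i | i <- enum 'I_#|T|].

Lemma sum_inj (T : finType) (F : seq T -> nat) :
  \sum_(sigma : {ffun 'I_#|T| -> T} | injectiveb sigma)
     F [seq sigma i | i <- enum 'I_#|T|] =
  \sum_(s <- permutations (enum T)) F s.
Proof.
rewrite -[LHS]big_filter.
set r := filter _ _.
have -> : \sum_(sigma <- r) F [seq sigma i | i <- enum 'I_#|T|] = \sum_(s <- map (@gseq T) r) F s by rewrite big_map.
apply: perm_big; apply: uniq_perm; last first.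
- move=> s; rewrite mem_permutations; apply/mapP/idP.
  + move=> [sigma]; rewrite /r mem_filter => /andP[/injectiveP inj _] ->.
    have Hsz : size (enum T) <= size (@gseq T sigma).
      by rewrite /gseq size_map size_enum_ord cardE.
    have Hu : uniq (@gseq T sigma) by rewrite map_inj_uniq ?enum_uniq.
    have Hsub : {subset @gseq T sigma <= enum T} by move=> x; rewrite mem_enum.
    have [_ H] := uniq_min_size Hu Hsub Hsz.
    exact: uniq_perm Hu (enum_uniq _) H.
  + move=> ps.
    have Us : uniq s by rewrite (perm_uniq ps) enum_uniq.
    have Ss : size s = #|T| by rewrite (perm_size ps) -cardE.
    exists [ffun i => nth (enum_val i) s i].
      rewrite /r mem_filter mem_index_enum andbT.
      apply/injectiveP => i j; rewrite !ffunE => H.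
      apply: val_inj; apply/eqP.
      move: H; rewrite (set_nth_default (enum_val i) (enum_val j)) ?Ss //.
      by move/eqP; rewrite nth_uniq ?Ss.
    case: s ps Us Ss => [|x0 s'] ps Us Ss.
      by apply/esym/eqP; rewrite -size_eq0 size_map size_enum_ord -Ss.
    apply: (@eq_from_nth _ x0); first by rewrite size_map size_enum_ord Ss.
    move=> i Hi; rewrite Ss in Hi.
    rewrite (nth_map (Ordinal Hi)) ?size_enum_ord // ffunE.
    rewrite (_ : nth (Ordinal Hi) (enum 'I_#|T|) i = Ordinal Hi) /=.
      by apply: set_nth_default; rewrite Ss.
    by have := nth_ord_enum (Ordinal Hi) (Ordinal Hi).
- by rewrite permutations_uniq.
- rewrite map_inj_uniq ?/r ?filter_uniq ?index_enum_uniq //.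
  move=> s1 s2 H; apply/ffunP => i.
  have E1 : forall f : {ffun 'I_#|T| -> T}, nth (s1 i) (@gseq T f) i = f i.
    move=> f; rewrite /gseq (nth_map i); last by rewrite size_enum_ord.
    by congr (f _); apply: nth_ord_enum.
  by have := congr1 (fun l => nth (s1 i) l i) H; rewrite /= !E1.
Qed.
Section Contr.
Variables (V : finType) (E : rel V) (u v : V) (m : nat).
Hypothesis neq_uv : u != v.
Hypothesis Euv : E u v.

Local Notation sub := {x : V | (x != u) && (x != v)}.
Local Notation C := (contr_vert u v).
Local Notation cR := (contr_rel E u v).
Local Notation dR := (del_rel E u v).

Definition cont (x : V) : C := insub x.
Definition firstb (a : C) : V := if a is Some y then val y else u.
Definition lastb (a : C) : V := if a is Some y then val y else v.
Definition blk (a : C) : seq V := if a is Some y then [:: val y] else [:: u; v].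
Definition expand (t : seq C) : seq V := flatten (map blk t).
Definition hc (x : V) : option C := if x == v then None else Some (cont x).
Definition contract (s : seq V) : seq C := pmap hc s.
Definition lift (g : {ffun C -> 'I_m}) : {ffun V -> 'I_m} := [ffun x => g (cont x)].
Definition restr (f : {ffun V -> 'I_m}) : {ffun C -> 'I_m} := [ffun a => f (firstb a)].

Lemma cont_u : cont u = None.
Proof. by rewrite /cont insubF // eqxx. Qed.
Lemma cont_v : cont v = None.
Proof. by rewrite /cont insubF // eqxx andbF. Qed.
Lemma cont_val (y : sub) : cont (val y) = Some y.
Proof. by rewrite /cont valK. Qed.

Lemma cont_first a : cont (firstb a) = a.
Proof. by case: a => [y|] /=; rewrite ?cont_val ?cont_u. Qed.
Lemma cont_last a : cont (lastb a) = a.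
Proof. by case: a => [y|] /=; rewrite ?cont_val ?cont_v. Qed.

Lemma lift_first g a : lift g (firstb a) = g a.
Proof. by rewrite ffunE cont_first. Qed.
Lemma lift_last g a : lift g (lastb a) = g a.
Proof. by rewrite ffunE cont_last. Qed.

Lemma expand_cons a t : expand (a :: t) = blk a ++ expand t.
Proof. by []. Qed.
Lemma expand_cat t1 t2 : expand (t1 ++ t2) = expand t1 ++ expand t2.
Proof. by rewrite /expand map_cat flatten_cat. Qed.

Lemma contract_cat s1 s2 : contract (s1 ++ s2) = contract s1 ++ contract s2.
Proof. exact: pmap_cat. Qed.

Lemma contract_expand t : contract (expand t) = t.
Proof.
elim: t => [|a t IH] //; rewrite expand_cons contract_cat IH.
case: a => [y|] /=.
  have /andP[_ yv] := valP y.
  by rewrite /hc (negbTE yv) cont_val.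
by rewrite /hc eqxx (negbTE neq_uv) cont_u.
Qed.

Lemma expand_contract s : u \notin s -> v \notin s -> expand (contract s) = s.
Proof.
elim: s => [|x s IH] //; rewrite !inE !negb_or => /andP[ux us] /andP[vx vs].
rewrite -cat1s contract_cat /contract /= /hc eq_sym (negbTE vx) /= -/(contract _) expand_cons IH //.
have Px : (x != u) && (x != v) by rewrite eq_sym ux eq_sym vx.
by rewrite /cont insubT.
Qed.

Lemma contract_mid s1 s2 :
  contract (s1 ++ u :: v :: s2) = contract s1 ++ None :: contract s2.
Proof.
by rewrite contract_cat /contract /= /hc eqxx (negbTE neq_uv) cont_u.
Qed.

Lemma mem_blk x a : (x \in blk a) = (cont x == a).
Proof.
rewrite /cont; case: insubP => [y Py <-|nP]; case: a => [z|] /=.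
- by rewrite !inE; apply/eqP/eqP => [/val_inj -> | [->]].
- have /andP[xu xv] := valP y.
  by rewrite !inE (negbTE xu) (negbTE xv).
- rewrite inE; apply/negP => /eqP Ex; move: nP; rewrite Ex.
  by rewrite (valP z).
- by move: nP; rewrite negb_and !negbK !inE.
Qed.

Lemma mem_expand x t : (x \in expand t) = (cont x \in t).
Proof.
elim: t => [|a t IH] //; rewrite expand_cons mem_cat mem_blk IH inE.
by [].
Qed.

Lemma has_blk a t : has (mem (blk a)) (expand t) = (a \in t).
Proof.
apply/hasP/idP => [[x xt xb]|Ha].
  by move: xt; rewrite mem_expand; move: xb; rewrite inE mem_blk => /eqP ->.
exists (firstb a); first by rewrite mem_expand cont_first.
by rewrite inE mem_blk cont_first.
Qed.

Lemma uniq_expand t : uniq (expand t) = uniq t.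
Proof.
elim: t => [|a t IH] //; rewrite expand_cons cat_uniq has_blk IH /=.
by case: a => [y|] //=; rewrite inE neq_uv andbT.
Qed.

Lemma cover_expand t : (forall x, x \in expand t) <-> (forall a, a \in t).
Proof.
split=> H.
  by move=> a; rewrite -(cont_first a) -mem_expand.
by move=> x; rewrite mem_expand.
Qed.

Lemma compat_uv g : compat dR (lift g) u v.
Proof.
by rewrite /compat /del_rel !eqxx /= andbF implyFb andbT !ffunE cont_u cont_v.
Qed.

Lemma compat_bound g a b : a != b ->
  compat dR (lift g) (lastb a) (firstb b) = compat cR g a b.
Proof.
move=> ab; rewrite /compat lift_last lift_first; congr (_ && (_ ==> _)).
rewrite /del_rel; case: a ab => [x|]; case: b => [y|] //= _.
- by have /andP[xu _] := valP x; rewrite (negbTE xu) andbT.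
- by have /andP[xu _] := valP x; rewrite (negbTE xu) andbT.
- by rewrite eq_sym (negbTE neq_uv) andbT.
Qed.

Lemma path_blk (r : rel V) x b rest : r u v ->
  path r x (blk b ++ rest) = r x (firstb b) && path r (lastb b) rest.
Proof. by move=> ruv; case: b => [y|] //=; rewrite ruv. Qed.

Lemma path_expand g a t : uniq (a :: t) ->
  path (compat cR g) a t = path (compat dR (lift g)) (lastb a) (expand t).
Proof.
elim: t a => [|b t IH] a //= /andP[]; rewrite inE negb_or => /andP[ab _] Ubt.
rewrite expand_cons path_blk ?compat_uv // compat_bound // IH //.
Qed.

Lemma sorted_expand g t : uniq t ->
  sorted (compat cR g) t = sorted (compat dR (lift g)) (expand t).
Proof.
case: t => [|a t] // U; rewrite /= path_expand // expand_cons.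
by case: a {U} => [y|] //=; rewrite compat_uv.
Qed.

Lemma not_sorted_split (f : {ffun V -> 'I_m}) s :
  sorted (compat dR f) s -> ~~ sorted (compat E f) s ->
  exists s1 s2, s = s1 ++ u :: v :: s2 /\ f u = f v.
Proof.
case: s => [|x s] //=.
elim: s x => [|y s IH] x //= /andP[Hd Hp].
case Hxy: (compat E f x y) => /=.
  by move=> /(IH y Hp) [s1 [s2 [-> fuv]]]; exists (x :: s1), s2.
move=> _; move: Hd Hxy; rewrite /compat /del_rel.
case: (eqVneq x u) => [->|xu]; case: (eqVneq y v) => [->|yv] /=;
  rewrite ?andbT ?andbF ?Euv //=.
- move=> /andP[fuv _] /negbT; rewrite negb_and fuv /= -leqNgt => fvu.
  exists [::], s; split => //; apply: val_inj; apply/eqP.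
  by rewrite eqn_leq fuv fvu.
- by move=> ->.
- by move=> ->.
- by move=> ->.
Qed.


Lemma restr_lift g : restr (lift g) = g.
Proof. by apply/ffunP => a; rewrite !ffunE cont_first. Qed.

Lemma stepB s :
  #|[set f : {ffun V -> 'I_m} | sorted (compat dR f) s]| =
  #|[set f : {ffun V -> 'I_m} | sorted (compat E f) s]| +
  #|[set f : {ffun V -> 'I_m} | sorted (compat dR f) s && ~~ sorted (compat E f) s]|.
Proof.
rewrite -(cardsID [set f : {ffun V -> 'I_m} | sorted (compat E f) s]
                  [set f : {ffun V -> 'I_m} | sorted (compat dR f) s]).
congr (_ + _); apply: eq_card => f; rewrite !inE.
- case HE: (sorted (compat E f) s); rewrite ?andbT ?andbF //.
  apply: sub_sorted HE => x y; rewrite /compat /del_rel => /andP[-> H] /=.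
  by apply/implyP => /andP[Exy _]; exact: (implyP H Exy).
- by rewrite andbC.
Qed.

Lemma stepC :
  \sum_(s <- permutations (enum V))
     #|[set f : {ffun V -> 'I_m} | sorted (compat dR f) s && ~~ sorted (compat E f) s]| =
  \sum_(t <- permutations (enum C)) #|[set g : {ffun C -> 'I_m} | sorted (compat cR g) t]|.
Proof.
rewrite !sum_card_count; symmetry.
apply: (count_bij (psi := fun p => (expand p.1, lift p.2))
                  (phi := fun p => (contract p.1, restr p.2))).
- by apply: uniq_pairs; apply: permutations_uniq.
- by apply: uniq_pairs; apply: permutations_uniq.
- by move=> [t g] /=; rewrite contract_expand restr_lift.
- move=> [t g]; rewrite mem_pairs /= => /permE [Ut Ct] Hs; split.
    rewrite mem_pairs /=; apply/permE; split; first by rewrite uniq_expand.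
    by apply/cover_expand.
  apply/andP; split; first by rewrite -sorted_expand.
  have : None \in t := Ct None.
  case/splitPr => t1 t2; rewrite expand_cat expand_cons /=.
  apply/negP => /(@sorted_mid _ _ _ _ _ _); rewrite /compat Euv !ffunE cont_u cont_v ltnn.
  by rewrite andbF.
- move=> [s f]; rewrite mem_pairs /= => /permE [Us Cs] /andP[Hd Hn].
  have [s1 [s2 [Es fuv]]] := not_sorted_split Hd Hn.
  have [u1 v1 u2 v2] : [/\ u \notin s1, v \notin s1, u \notin s2 & v \notin s2].
    move: Us; rewrite Es cat_uniq => /and3P[_ H1 H2].
    move: H1 H2; rewrite /= !inE !negb_or => /andP[-> /andP[-> _]].
    by case/andP => /andP[_ ->] /andP[-> _].
  have Hs : expand (contract s) = s.
    by rewrite Es contract_mid expand_cat expand_cons !expand_contract.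
  have Hf : lift (restr f) = f.
    apply/ffunP => x; rewrite !ffunE /cont; case: insubP => [y _ <-|nP] //=.
    by move: nP; rewrite negb_and !negbK => /orP[] /eqP ->.
  have Ut : uniq (contract s) by rewrite -uniq_expand Hs.
  split.
  + rewrite mem_pairs /=; apply/permE; split => //.
    by apply/cover_expand; rewrite Hs.
  + by rewrite /= sorted_expand // Hs Hf.
  + by rewrite /= Hs Hf.
Qed.

End Contr.

Lemma RB_perm (T : finType) (R : rel T) m :
  redei_berge R m =
  \sum_(s <- permutations (enum T)) #|[set f : {ffun T -> 'I_m} | sorted (compat R f) s]|.
Proof.
exact: (sum_inj (fun s => #|[set f : {ffun T -> 'I_m} | sorted (compat R f) s]|)).
Qed.

Unset Implicit Arguments.
Local Open Scope ring_scope.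

Theorem mainTheorem13 (V : finType) (E : rel V) (u v : V) (m : nat) :
  irreflexive E -> E u v ->
  (redei_berge E m)%:Z =
    (redei_berge (del_rel E u v) m)%:Z - (redei_berge (contr_rel E u v) m)%:Z.
Proof.
move=> Hirr Euv.
have neq : u != v by apply/eqP => e; move: Euv; rewrite e Hirr.
rewrite !RB_perm -(stepC m neq Euv).
rewrite (eq_bigr _ (fun s _ => stepB E u v m s)) big_split /=.
by rewrite PoszD GRing.addrK.
Qed.
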